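(* Let $(\chi_1,u_1)$ and $(\chi_2,u_2)$ be rooted chirotopes (not necessarily realizable). Then their join $(\chi_3,u_3)=(\chi_1,u_1)\vee(\chi_2,u_2)$ is a rooted chirotope; that is, $\chi_3$ is a chirotope and $u_3$ is an extreme element of $\chi_3$.
   Context: For a finite set $E$, $(E)_3$ is the set of ordered triples of distinct elements of $E$. A sign function on $E$ is a map $\chi:(E)_3\to\{-1,1\}$ with $\chi(x,y,z)=\chi(y,z,x)=\chi(z,x,y)=-\chi(z,y,x)=-\chi(y,x,z)=-\chi(x,z,y)$. A chirotope on $E$ is a sign function that moreover satisfies: (interiority) for distinct $t,x,y,z$, if $\chi(t,y,z)=\chi(x,t,z)=\chi(x,y,t)=1$ then $\chi(x,y,z)=1$; (transitivity) for distinct $s,t,x,y,z$, if $\chi(t,s,x)=\chi(t,s,y)=\chi(t,s,z)=\chi(x,y,t)=\chi(y,z,t)=1$ then $\chi(x,z,t)=1$. An element $x$ is extreme if there is $y\ne x$ such that $\chi(x,y,z)$ takes the same value for all $z\in E\setminus\{x,y\}$. A rooted chirotope is a pair $(\chi,u)$ with $\chi$ a chirotope on $X\cup\{u\}$ and $u\notin X$ an extreme element. For a rooted chirotope, $u^+$ (resp. $u^-$) is the element $y$ with $\chi(u,y,z)=1$ (resp. $\chi(y,u,z)=1$) for all $z\notin\{u,y\}$ (the successor/predecessor of $u$ in counterclockwise order on the convex hull). Join: given rooted chirotopes $(\chi_1,u_1)$ on $X_1\cup\{u_1\}$ and $(\chi_2,u_2)$ on $X_2\cup\{u_2\}$, let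 $X_3$ be the disjoint union of $X_1$ and $X_2$ in which $u_1^-$ and $u_2^+$ are identified into one element $x_0$ (so $X_1,X_2\subseteq X_3$ with $X_1\cap X_2=\{x_0\}$), and let $u_3$ be a new element. The join $(\chi_3,u_3)$ has $\chi_3$ the sign function on $X_3\cup\{u_3\}$ determined (using symmetry) by: for $x,y,z\in X_3$, $\chi_3(x,y,z)=\chi_1(x,y,z)$ if $x,y,z\in X_1$; $=\chi_2(x,y,z)$ if $x,y,z\in X_2$; $=\chi_1(x,y,u_1)$ if $x,y\in X_1$ and $z\in X_2\setminus\{u_2^+\}$; $=\chi_2(u_2,y,z)$ if $x\in X_1\setminus\{u_1^-\}$ and $y,z\in X_2$; and for $x,y\in X_3$, $\chi_3(x,y,u_3)=\chi_1(x,y,u_1)$ if $x,y\in X_1$; $=\chi_2(x,y,u_2)$ if $x,y\in X_2$; $=1$ if $x\in X_1\setminus\{u_1^-\}$ and $y\in X_2\setminus\{u_2^+\}$. (These rules are consistent and determine $\chi_3$ on all triples.) *)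

(* Defs.v *)
From HB Require Import structures.
From mathcomp Require Import all_boot all_order all_algebra.
Set Implicit Arguments. Unset Strict Implicit. Unset Printing Implicit Defensive.
Import Order.TTheory GRing.Theory Num.Theory.
Local Open Scope ring_scope.

(* A sign function / chirotope on a finite set E is modelled as a map
   chi : E -> E -> E -> int on a finType E; only its values on triples of
   pairwise distinct elements matter. *)

Definition distinct3 (T : eqType) (x y z : T) := uniq [:: x; y; z].

Definition sign_function (T : finType) (chi : T -> T -> T -> int) : Prop :=
  forall x y z, distinct3 x y z ->
    (chi x y z = 1 \/ chi x y z = -1) /\
    chi x y z = chi y z x /\ chi x y z = chi z x y /\
    chi x y z = - chi z y x /\ chi x y z = - chi y x z /\
    chi x y z = - chi x z y.

Definition interiority (T : finType) (chi : T -> T -> T -> int) : Prop :=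
  forall t x y z, uniq [:: t; x; y; z] ->
    chi t y z = 1 -> chi x t z = 1 -> chi x y t = 1 -> chi x y z = 1.

Definition transitivity (T : finType) (chi : T -> T -> T -> int) : Prop :=
  forall s t x y z, uniq [:: s; t; x; y; z] ->
    chi t s x = 1 -> chi t s y = 1 -> chi t s z = 1 ->
    chi x y t = 1 -> chi y z t = 1 -> chi x z t = 1.

Definition chirotope (T : finType) (chi : T -> T -> T -> int) : Prop :=
  [/\ sign_function chi, interiority chi & transitivity chi].

Definition extreme (T : finType) (chi : T -> T -> T -> int) (x : T) : Prop :=
  exists y, y != x /\
    exists s : int, forall z, z != x -> z != y -> chi x y z = s.

Definition rooted_chirotope (T : finType) (chi : T -> T -> T -> int) (u : T) :=
  chirotope chi /\ extreme chi u.

Definition is_succ (T : finType) (chi : T -> T -> T -> int) (u y : T) :=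
  y != u /\ forall z, z != u -> z != y -> chi u y z = 1.
Definition is_pred (T : finType) (chi : T -> T -> T -> int) (u y : T) :=
  y != u /\ forall z, z != u -> z != y -> chi y u z = 1.

Section Join.
Variables (T1 T2 : finType) (chi1 : T1 -> T1 -> T1 -> int) (u1 u1m : T1)
          (chi2 : T2 -> T2 -> T2 -> int) (u2 u2p : T2).

(* X1 = T1 \ {u1};  X2 \ {u2^+} = T2 \ {u2, u2p}.
   X3 = X1 ⊔ (X2 \ {u2^+}) (so u2^+ is identified with u1^- = x0 ∈ X1),
   and the join ground set is X3 ∪ {u3} with u3 = None. *)
Definition join_type : finType :=
  option ({x : T1 | x != u1} + {y : T2 | (y != u2) && (y != u2p)})%type.

Definition to1 (x : join_type) : option T1 :=
  match x with Some (inl a) => Some (val a) | _ => None end.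
Definition to2 (x : join_type) : option T2 :=
  match x with
  | Some (inl a) => if val a == u1m then Some u2p else None
  | Some (inr b) => Some (val b)
  | None => None
  end.
Definition pureA (x : join_type) : bool :=
  match x with Some (inl a) => val a != u1m | _ => false end.
Definition pureB (x : join_type) : bool :=
  match x with Some (inr _) => true | _ => false end.

Definition join_rule (x y z : join_type) : option int :=
  match x, y with
  | None, _ => None
  | _, None => None
  | _, _ =>
    match z with
    | None =>
      match to1 x, to1 y with
      | Some a, Some b => Some (chi1 a b u1)
      | _, _ =>
        match to2 x, to2 y with
        | Some a, Some b => Some (chi2 a b u2)
        | _, _ => if pureA x && pureB y then Some 1 else None
        end
      end
    | Some _ =>
      match to1 x, to1 y, to1 z with
      | Some a, Some b, Some c => Some (chi1 a b c)
      | _, _, _ =>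
        match to2 x, to2 y, to2 z with
        | Some a, Some b, Some c => Some (chi2 a b c)
        | _, _, _ =>
          match to1 x, to1 y with
          | Some a, Some b => if pureB z then Some (chi1 a b u1) else None
          | _, _ =>
            match to2 y, to2 z with
            | Some b, Some c => if pureA x then Some (chi2 u2 b c) else None
            | _, _ => None
            end
          end
        end
      end
    end
  end.

(* chi3 is determined from the rules using the symmetries of a sign function *)
Definition join_chi (x y z : join_type) : int :=
  if join_rule x y z is Some s then s else
  if join_rule y z x is Some s then s else
  if join_rule z x y is Some s then s else
  if join_rule z y x is Some s then - s else
  if join_rule y x z is Some s then - s else
  if join_rule x z y is Some s then - s else 1.

End Join.

Arguments join_chi {T1 T2} chi1 u1 u1m chi2 u2 u2p x y z.
Arguments join_rule {T1 T2} chi1 u1 u1m chi2 u2 u2p x y z.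

(* Main.v *)
Require Import Defs.
From mathcomp Require Import all_boot all_order all_algebra.
From mathcomp Require Import zify.
Set Implicit Arguments. Unset Strict Implicit. Unset Printing Implicit Defensive.
Import Order.TTheory GRing.Theory Num.Theory.

(* Proof strategy: a rooted chirotope (chi,u) is equivalent, via the
   angular order around u, to a rank-3 "signotope" (monotone on sorted 4-sets);
   finite 4/5-point facts are checked by computation (vm_compute) and transferred. *)


Definition trip (n : nat) : seq (nat * nat * nat) :=
  filter (fun t : nat * nat * nat => (t.1.1 < t.1.2) && (t.1.2 < t.2))
   (flatten [seq flatten [seq [seq (a, b, c) | c <- iota 0 n] | b <- iota 0 n]
            | a <- iota 0 n]).

Definition bget (bs : seq bool) n a b c := nth false bs (index (a, b, c) (trip n)).

Definition ori (bs : seq bool) n (i j l : nat) : bool :=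
  if i < j then
    if j < l then bget bs n i j l else if i < l then ~~ bget bs n i l j else bget bs n l i j
  else if i < l then ~~ bget bs n j i l else if j < l then bget bs n j l i
       else ~~ bget bs n l j i.

Definition intb bs n :=
  all (fun t => all (fun x => all (fun y => all (fun z =>
    if uniq [:: t; x; y; z] then
      if ori bs n t y z then if ori bs n x t z then if ori bs n x y t then
        ori bs n x y z else true else true else true
    else true) (iota 0 n)) (iota 0 n)) (iota 0 n)) (iota 0 n).

Definition trb bs n :=
  all (fun s => all (fun t => all (fun x => all (fun y => all (fun z =>
    if uniq [:: s; t; x; y; z] then
      if ori bs n t s x then if ori bs n t s y then if ori bs n t s z then
      if ori bs n x y t then if ori bs n y z t then ori bs n x z t
      else true else true else true else true else true
    else true) (iota 0 n)) (iota 0 n)) (iota 0 n)) (iota 0 n)) (iota 0 n).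

Definition monob bs n p q r s :=
  ((ori bs n q r s != ori bs n p r s) + (ori bs n p r s != ori bs n p q s)
   + (ori bs n p q s != ori bs n p q r) <= 1)%N.

Fixpoint blists n : seq (seq bool) :=
  if n is m.+1 then flatten [seq [seq b :: l | l <- blists m] | b <- [:: false; true]]
  else [:: [::]].

Definition FC1 := all (fun bs => if monob bs 4 0 1 2 3 then intb bs 4 else true) (blists 4).

Definition FC2 := all (fun bs =>
  if [&& monob bs 5 0 1 2 3, monob bs 5 0 1 2 4, monob bs 5 0 1 3 4,
         monob bs 5 0 2 3 4 & monob bs 5 1 2 3 4] then trb bs 5 else true) (blists 10).

Definition FC3 := all (fun bs =>
  if [&& ori bs 5 1 0 2, ori bs 5 1 0 3, ori bs 5 1 0 4, ori bs 5 2 3 0 & ori bs 5 3 4 0] then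
    if intb bs 5 then if trb bs 5 then ori bs 5 2 4 0 else true else true else true) (blists 10).

Definition FC4 := all (fun bs =>
  if [&& ori bs 5 0 1 2, ori bs 5 0 1 3, ori bs 5 0 1 4, ori bs 5 2 3 0 & ori bs 5 3 4 0] then
    if intb bs 5 then if trb bs 5 then ori bs 5 2 4 0 else true else true else true) (blists 10).

Definition FC5 := all (fun bs =>
  if [&& ori bs 5 0 1 2, ori bs 5 0 1 3, ori bs 5 0 1 4, ori bs 5 0 2 3,
         ori bs 5 0 2 4 & ori bs 5 0 3 4] then
    if intb bs 5 then if trb bs 5 then monob bs 5 1 2 3 4 else true else true else true) (blists 10).

Lemma FC1_ok : FC1. Proof. by vm_compute. Qed.
Lemma FC2_ok : FC2. Proof. by vm_compute. Qed.
Lemma FC3_ok : FC3. Proof. by vm_compute. Qed.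
Lemma FC4_ok : FC4. Proof. by vm_compute. Qed.
Lemma FC5_ok : FC5. Proof. by vm_compute. Qed.


Ltac destr_and := repeat match goal with
 | H : is_true (_ && _) |- _ => let H1 := fresh "H" in let H2 := fresh "H" in move/andP: H => [H1 H2]
 end.
Ltac dtac := rewrite /distinct3 /= ?inE ?negb_or ?andbT; repeat (apply/andP; split); first [done | by rewrite eq_sym].

Lemma blists_mem l : l \in blists (size l).
Proof.
elim: l => [|b l IH]; first by [].
have -> : size (b :: l) = (size l).+1 by [].
rewrite [blists _.+1]/=; case: b; rewrite !mem_cat;
  [apply/orP; right; apply/orP; left | apply/orP; left]; by apply/mapP; exists l.

Qed.

Definition mono4 (a b c d : int) := ((a != b) + (b != c) + (c != d) <= 1)%N.

Section SF.
Variables (T : finType) (chi : T -> T -> T -> int).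
Hypothesis sf : sign_function chi.

Lemma d3E (x y z : T) : distinct3 x y z = [&& x != y, x != z & y != z].
Proof. by rewrite /distinct3 /= !inE !negb_or andbT andbA. Qed.
Lemma d3_rot (x y z : T) : distinct3 x y z -> distinct3 y z x.
Proof. rewrite !d3E => /and3P [] a b c; apply/and3P; split; by rewrite // eq_sym. Qed.
Lemma d3_sw (x y z : T) : distinct3 x y z -> distinct3 y x z.
Proof. rewrite !d3E => /and3P [] a b c; apply/and3P; split; by rewrite // eq_sym. Qed.
Lemma d3_sw23 (x y z : T) : distinct3 x y z -> distinct3 x z y.
Proof. rewrite !d3E => /and3P [] a b c; apply/and3P; split; by rewrite // eq_sym. Qed.

Lemma sf_val x y z : distinct3 x y z -> chi x y z = 1%R \/ chi x y z = (-1)%R.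
Proof. by move=> d; case: (sf d). Qed.
Lemma sf_rot x y z : distinct3 x y z -> chi x y z = chi y z x.
Proof. by move=> d; case: (sf d) => _ []. Qed.
Lemma sf_sw x y z : distinct3 x y z -> chi x y z = (- chi y x z)%R.
Proof. by move=> d; case: (sf d) => _ [] _ [] _ [] _ []. Qed.
Lemma sf_sw23 x y z : distinct3 x y z -> chi x y z = (- chi x z y)%R.
Proof. by move=> d; case: (sf d) => _ [] _ [] _ [] _ []. Qed.

Lemma pm1_neg (v : int) : v = 1%R \/ v = (-1)%R -> ((- v)%R == 1%R) = ~~ (v == 1%R).
Proof. by case=> ->. Qed.

Lemma sf_sw_b x y z : distinct3 x y z -> (chi x y z == 1%R) = ~~ (chi y x z == 1%R).
Proof. move=> d; rewrite sf_sw // pm1_neg //; exact/sf_val/d3_sw. Qed.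
Lemma sf_sw23_b x y z : distinct3 x y z -> (chi x y z == 1%R) = ~~ (chi x z y == 1%R).
Proof.
move=> d; rewrite sf_sw23 // pm1_neg //; exact/sf_val/d3_sw23.
Qed.

Lemma sf_valb x y z : distinct3 x y z -> chi x y z = if chi x y z == 1%R then 1%R else (-1)%R.
Proof. by move=> d; case: (sf_val d) => ->. Qed.

End SF.

Lemma mem_trip n a b c : a < b -> b < c -> c < n -> (a, b, c) \in trip n.
Proof.
move=> ab bc cn; rewrite mem_filter /= ab bc /=.
apply/flatten_mapP; exists a; first by rewrite mem_iota; lia.
apply/flatten_mapP; exists b; first by rewrite mem_iota; lia.
apply/mapP; exists c => //; rewrite mem_iota; lia.
Qed.

Section Bridge.
Variables (T : finType) (chi : T -> T -> T -> int) (x0 : T).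
Hypothesis sf : sign_function chi.

Definition bitsOf (w : seq T) n :=
  [seq chi (nth x0 w t.1.1) (nth x0 w t.1.2) (nth x0 w t.2) == 1%R | t <- trip n].

Variable w : seq T.
Hypothesis uw : uniq w.
Local Notation n := (size w).
Local Notation W := (nth x0 w).

Lemma bget_bits a b c : a < b -> b < c -> c < n ->
  bget (bitsOf w n) n a b c = (chi (W a) (W b) (W c) == 1%R).
Proof.
move=> ab bc cn; rewrite /bget /bitsOf.
have m := mem_trip ab bc cn.
by rewrite (nth_map (0,0,0)%N) ?index_mem // nth_index.
Qed.

Lemma W_d3 i j l : i < n -> j < n -> l < n -> uniq [:: i; j; l] -> distinct3 (W i) (W j) (W l).
Proof.
move=> hi hj hl; rewrite /distinct3 /= !inE !negb_or !andbT.
by rewrite !nth_uniq.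
Qed.

Lemma ori_bits i j l : i < n -> j < n -> l < n -> uniq [:: i; j; l] ->
  ori (bitsOf w n) n i j l = (chi (W i) (W j) (W l) == 1%R).
Proof.
move=> hi hj hl u; have d := W_d3 hi hj hl u.
move: u; rewrite /= !inE !negb_or andbT => /andP [] /andP [] nij nil njl.
rewrite /ori.
case: (ltngtP i j) nij => hij // _; case: (ltngtP j l) njl => hjl // _;
  case: (ltngtP i l) nil => hil // _; try lia.
all: rewrite bget_bits //.
- by rewrite (sf_sw23_b sf d).
- by rewrite (sf_rot sf d) (sf_rot sf (d3_rot d)).
- by rewrite (sf_sw_b sf d).
- by rewrite (sf_rot sf d).
- by rewrite (sf_rot sf d) (sf_sw_b sf (d3_rot d)).
Qed.

Lemma Wneq i j : i < n -> j < n -> i != j -> W i != W j.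
Proof. by move=> hi hj; rewrite nth_uniq. Qed.

Lemma uniqW s : all (fun i => i < n) s -> uniq (map W s) = uniq s.
Proof.
move=> /allP hs; apply: map_inj_in_uniq => i j hi hj /eqP.
by rewrite nth_uniq ?hs // => /eqP.
Qed.

Lemma chiro_bits : chirotope chi -> intb (bitsOf w n) n && trb (bitsOf w n) n.
Proof.
case=> _ hin htr; apply/andP; split.
- apply/allP => t; rewrite mem_iota add0n => /andP [_ tn].
  apply/allP => x; rewrite mem_iota add0n => /andP [_ xn].
  apply/allP => y; rewrite mem_iota add0n => /andP [_ yn].
  apply/allP => z; rewrite mem_iota add0n => /andP [_ zn].
  case: ifP => // u.
  have uW : uniq [:: W t; W x; W y; W z] by rewrite -[uniq [:: W t; W x; W y; W z]]/(uniq (map W [:: t; x; y; z])) uniqW //= tn xn yn zn.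
  move: (u); rewrite /= !inE !negb_or => u'; destr_and.
  rewrite !ori_bits //; try dtac.
  do 3 (case: ifP => [/eqP ? | //]); by rewrite (hin (W t) (W x) (W y) (W z)) //.
- apply/allP => s; rewrite mem_iota add0n => /andP [_ sn].
  apply/allP => t; rewrite mem_iota add0n => /andP [_ tn].
  apply/allP => x; rewrite mem_iota add0n => /andP [_ xn].
  apply/allP => y; rewrite mem_iota add0n => /andP [_ yn].
  apply/allP => z; rewrite mem_iota add0n => /andP [_ zn].
  case: ifP => // u.
  have uW : uniq [:: W s; W t; W x; W y; W z] by rewrite -[uniq [:: W s; W t; W x; W y; W z]]/(uniq (map W [:: s; t; x; y; z])) uniqW //= sn tn xn yn zn.
  move: (u); rewrite /= !inE !negb_or => u'; destr_and.
  rewrite !ori_bits //; try dtac.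
  do 5 (case: ifP => [/eqP ? | //]); by rewrite (htr (W s) (W t) (W x) (W y) (W z)) //.
Qed.

Lemma idx_neq p q : p \in w -> q \in w -> p != q -> index p w != index q w.
Proof. by move=> hp hq; apply: contra_neq => /(index_inj x0 hp hq). Qed.

Lemma ori_idx p q r : p \in w -> q \in w -> r \in w -> distinct3 p q r ->
  ori (bitsOf w n) n (index p w) (index q w) (index r w) = (chi p q r == 1%R).
Proof.
move=> hp hq hr; rewrite d3E => /and3P [pq pr qr].
rewrite ori_bits ?index_mem ?nth_index //=.
by rewrite !inE !negb_or !idx_neq.
Qed.

Lemma neq_b (a b : int) : a = 1%R \/ a = (-1)%R -> b = 1%R \/ b = (-1)%R ->
  (a != b) = ((a == 1%R) != (b == 1%R)).
Proof. by case=> ->; case=> ->. Qed.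

Lemma monob_bits p q r s : p < n -> q < n -> r < n -> s < n -> uniq [:: p; q; r; s] ->
  monob (bitsOf w n) n p q r s =
  mono4 (chi (W q) (W r) (W s)) (chi (W p) (W r) (W s)) (chi (W p) (W q) (W s)) (chi (W p) (W q) (W r)).
Proof.
move=> hp hq hr hs u; move: (u); rewrite /= !inE !negb_or => u'; destr_and.
rewrite /monob /mono4 !ori_bits //; try dtac.
rewrite !neq_b //; apply: (sf_val sf); apply: W_d3 => //; dtac.
Qed.
End Bridge.



Section SigChi.
Variables (T : finType) (chi : T -> T -> T -> int) (lt : rel T).
Hypotheses (sf : sign_function chi) (irr : irreflexive lt) (trlt : transitive lt)
  (tot : forall x y, x != y -> lt x y || lt y x)
  (sig : forall p q r s, lt p q -> lt q r -> lt r s ->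
      mono4 (chi q r s) (chi p r s) (chi p q s) (chi p q r)).

Definition leo a b := (a == b) || lt a b.
Lemma leo_total : total leo.
Proof.
move=> a b; rewrite /leo; case: (eqVneq a b) => [->|/tot/orP [] ->]; by rewrite ?eqxx ?orbT.
Qed.
Lemma leo_trans : transitive leo.
Proof.
move=> b a c; rewrite /leo => /orP [/eqP -> //| ab] /orP [/eqP <- | bc]; by rewrite ?ab ?(trlt ab bc) orbT.
Qed.

Lemma sort_lt (s : seq T) (x0 : T) : uniq s -> forall i j, i < j -> j < size (sort leo s) ->
  lt (nth x0 (sort leo s) i) (nth x0 (sort leo s) j).
Proof.
move=> us i j ij js.
have pw : perm_eq (sort leo s) s by rewrite perm_sort.
have uw : uniq (sort leo s) by rewrite (perm_uniq pw).
have := sorted_ltn_nth leo_trans x0 (sort_sorted leo_total s).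
move=> /(_ i j); rewrite !inE => /(_ (ltn_trans ij js) js ij).
rewrite /leo nth_uniq ?(ltn_trans ij js) //.
by case: eqVneq ij => // ->; rewrite ltnn.
Qed.

Lemma FC_mem k (w : seq T) x0 : size w = k -> bitsOf chi x0 w (size w) \in blists (size (trip k)).
Proof. by move=> <-; have := blists_mem (bitsOf chi x0 w (size w)); rewrite size_map. Qed.

Lemma iota_idx (w : seq T) p : p \in w -> index p w \in iota 0 (size w).
Proof. by rewrite mem_iota add0n index_mem. Qed.

Lemma sig_int : interiority chi.
Proof.
move=> t x y z u h1 h2 h3.
set s := [:: t; x; y; z]; set w := sort leo s.
have pw : perm_eq w s by rewrite perm_sort.
have uw : uniq w by rewrite (perm_uniq pw).
have sw : size w = 4 by rewrite (perm_size pw).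
have mw p : p \in s -> p \in w by rewrite (perm_mem pw).
have := allP FC1_ok _ (FC_mem t sw); rewrite -sw.
rewrite monob_bits //; try by rewrite sw.
have lw i j : i < j -> j < 4 -> lt (nth t w i) (nth t w j) by move=> ij j4; apply: sort_lt => //; rewrite sw.
rewrite sig ?lw //.
move/allP/(_ _ (iota_idx (mw t _)))/allP/(_ _ (iota_idx (mw x _)))/allP/(_ _ (iota_idx (mw y _)))
  /allP/(_ _ (iota_idx (mw z _))).
move: (u); rewrite /= !inE !negb_or => u'; destr_and.
rewrite !eqxx /= ?orbT => /(_ isT isT isT isT).
rewrite !idx_neq ?mw ?inE ?eqxx ?orbT //; try by rewrite eq_sym.
rewrite !ori_idx ?mw ?inE ?eqxx ?orbT //; try dtac.
by rewrite h1 h2 h3 eqxx => /eqP.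
Qed.

Lemma sig_tr : transitivity chi.
Proof.
move=> s0 t x y z u h1 h2 h3 h4 h5.
set s := [:: s0; t; x; y; z]; set w := sort leo s.
have pw : perm_eq w s by rewrite perm_sort.
have uw : uniq w by rewrite (perm_uniq pw).
have sw : size w = 5 by rewrite (perm_size pw).
have mw p : p \in s -> p \in w by rewrite (perm_mem pw).
have := allP FC2_ok _ (FC_mem t sw); rewrite -sw.
rewrite !monob_bits //; try by rewrite sw.
have lw i j : i < j -> j < 5 -> lt (nth t w i) (nth t w j) by move=> ij j4; apply: sort_lt => //; rewrite sw.
rewrite !sig ?lw //=.
move/allP/(_ _ (iota_idx (mw s0 _)))/allP/(_ _ (iota_idx (mw t _)))/allP/(_ _ (iota_idx (mw x _)))/allP/(_ _ (iota_idx (mw y _)))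
  /allP/(_ _ (iota_idx (mw z _))).
move: (u); rewrite /= !inE !negb_or => u'; destr_and.
rewrite !eqxx /= ?orbT => /(_ isT isT isT isT isT).
rewrite !idx_neq ?mw ?inE ?eqxx ?orbT //; try by rewrite eq_sym.
rewrite !ori_idx ?mw ?inE ?eqxx ?orbT //; try dtac.
by rewrite h1 h2 h3 h4 h5 eqxx => /eqP.
Qed.

Lemma sig_chirotope : chirotope chi.
Proof. by split; [exact: sf | exact: sig_int | exact: sig_tr]. Qed.
End SigChi.



Definition ltu (T : finType) (chi : T -> T -> T -> int) (u : T) (a b : T) : bool :=
  ((a == u) && (b != u)) || [&& a != u, b != u, a != b & chi a b u == 1%R].

Section Ltu.
Variables (T : finType) (chi : T -> T -> T -> int) (u : T).
Hypothesis ch : chirotope chi.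
Let sf : sign_function chi. Proof. by case: ch. Qed.

Local Notation lt := (ltu chi u).

Lemma ltu_irr : irreflexive lt.
Proof. by move=> a; rewrite /ltu andbN eqxx /= ?andbF. Qed.

Lemma ltu_r a b : lt a b -> b != u.
Proof. by rewrite /ltu => /orP [/andP [] _ // | /and4P [] _ //]. Qed.

Lemma ltuE a b : a != u -> b != u -> a != b -> lt a b = (chi a b u == 1%R).
Proof. by move=> au bu ab; rewrite /ltu (negbTE au) bu ab. Qed.

Lemma ltu_uE b : lt u b = (b != u).
Proof. by rewrite /ltu eqxx /= ?orbF. Qed.

Lemma ltu_l a b : lt a b -> a != u -> [&& b != u, a != b & chi a b u == 1%R].
Proof. by move=> h au; move: h; rewrite /ltu (negbTE au) /=. Qed.

Lemma ltu_tot a b : a != b -> lt a b || lt b a.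
Proof.
move=> ab; case: (eqVneq a u) => [ea|au].
  by rewrite ea ltu_uE -ea eq_sym ab.
case: (eqVneq b u) => [eb|bu]; first by rewrite eb ltu_uE au orbT.
rewrite !ltuE // 1?eq_sym //.
have d : distinct3 a b u by dtac.
rewrite (sf_sw sf d); case: (sf_val sf (d3_sw d)) => ->; by rewrite ?orbT.
Qed.

Lemma ltu_as a b : lt a b -> lt b a -> False.
Proof.
move=> h1 h2; case: (eqVneq a u) => [ea|au].
  by move: (ltu_r h2); rewrite ea eqxx.
case/and3P: (ltu_l h1 au) => bu ab /eqP c1.
case/and3P: (ltu_l h2 bu) => _ _ /eqP c2.
have d : distinct3 a b u by dtac.
by move: c1; rewrite (sf_sw sf d) c2.
Qed.

Lemma ltu_mono (trl : transitive lt) p q r s : lt p q -> lt q r -> lt r s ->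
  mono4 (chi q r s) (chi p r s) (chi p q s) (chi p q r).
Proof.
move=> pq qr rs.
have pr := trl _ _ _ pq qr; have qs := trl _ _ _ qr rs; have ps := trl _ _ _ pr rs.
have qu := ltu_r pq; have ru := ltu_r qr; have su := ltu_r rs.
have e1 a b : lt a b -> a != u -> chi a b u = 1%R by move=> h au; case/and3P: (ltu_l h au) => _ _ /eqP.
have nq a b : lt a b -> a != b by move=> h; apply/eqP => e; move: h; rewrite e ltu_irr.
have npq := nq _ _ pq; have npr := nq _ _ pr; have nps := nq _ _ ps.
have nqr := nq _ _ qr; have nqs := nq _ _ qs; have nrs := nq _ _ rs.
have rotE a b : lt a b -> a != u -> chi u a b = 1%R.
  move=> h au; have bu := ltu_r h; have ab := nq _ _ h.
  rewrite (sf_rot sf (x:=u)); [exact: e1 | dtac].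
case: (eqVneq p u) => [ep|pu].
  by rewrite ep !rotE // /mono4 eqxx /=; case: (_ != _).
set w := [:: u; p; q; r; s].
have uw : uniq w by dtac.
have := allP FC5_ok _ (@FC_mem T chi 5 w u erefl).
rewrite [size w]/= !ori_bits //=; try dtac.
have rot a b : a != u -> b != u -> a != b -> chi u a b = chi a b u.
  by move=> ? ? ?; apply: (sf_rot sf); dtac.
rewrite !rot // !e1 // eqxx /=.
have [i t] := ch.
move: (chiro_bits u sf uw ch); rewrite [size w]/= => /andP [-> ->].
rewrite monob_bits //.
Qed.

Lemma ltu_pre a b c : lt a b -> lt b c -> a != u ->
  [/\ b != u, c != u, a != b, b != c & a != c] /\ (chi a b u = 1%R /\ chi b c u = 1%R).
Proof.
move=> ab bc au.
have cu := ltu_r bc; have bu := ltu_r ab.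
case/and3P: (ltu_l ab au) => _ nab /eqP c1.
case/and3P: (ltu_l bc bu) => _ nbc /eqP c2.
case: (eqVneq a c) => [eac|nac]; first by exfalso; apply: (ltu_as ab); rewrite eac.
by [].
Qed.

Lemma ltu_trans_pred m : is_pred chi u m -> transitive lt.
Proof.
case=> mu hm b a c ab bc.
case: (eqVneq a u) => [ea|au]; first by rewrite ea ltu_uE (ltu_r bc).
have [[bu cu nab nbc nac] [c1 c2]] := ltu_pre ab bc au.
rewrite ltuE //.
have pm x : x != u -> x != m -> chi x m u = 1%R.
  move=> xu xm; rewrite (sf_rot sf (x := x)) ?hm //; dtac.
have sw x y : x != y -> x != u -> y != u -> chi x y u = (- chi y x u)%R.
  move=> ? ? ?; apply: (sf_sw sf); dtac.
case: (eqVneq c m) => [ecm|ncm]; first by rewrite ecm pm // -ecm.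
case: (eqVneq a m) => [eam|nam].
  have mb : m != b by rewrite -eam.
  by move: c1; rewrite eam (sw m b mb mu bu) (pm b bu) 1?eq_sym // => /eqP.
case: (eqVneq b m) => [ebm|nbm].
  have mc : m != c by rewrite -ebm.
  by move: c2; rewrite ebm (sw m c mc mu cu) (pm c cu) 1?eq_sym // => /eqP.
set w := [:: u; m; a; b; c].
have uw : uniq w by dtac.
have := allP FC3_ok _ (@FC_mem T chi 5 w u erefl).
rewrite [size w]/= !ori_bits //=; try dtac.
rewrite !hm // c1 c2 eqxx /=.
move: (chiro_bits u sf uw ch); rewrite [size w]/= => /andP [-> ->].
by [].
Qed.

Lemma ltu_trans_succ p : is_succ chi u p -> transitive lt.
Proof.
case=> pu hp b a c ab bc.
case: (eqVneq a u) => [ea|au]; first by rewrite ea ltu_uE (ltu_r bc).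
have [[bu cu nab nbc nac] [c1 c2]] := ltu_pre ab bc au.
rewrite ltuE //.
have pm x : x != u -> x != p -> chi p x u = 1%R.
  move=> xu xp; rewrite (sf_rot sf (x:=p) (y:=x) (z:=u)); first rewrite (sf_rot sf (x:=x) (y:=u) (z:=p)) ?hp //; dtac.
have sw x y : x != y -> x != u -> y != u -> chi x y u = (- chi y x u)%R.
  move=> ? ? ?; apply: (sf_sw sf); dtac.
case: (eqVneq a p) => [eap|nap]; first by rewrite eap pm // -eap eq_sym.
case: (eqVneq b p) => [ebp|nbp].
  have ap : a != p by rewrite -ebp.
  by move: c1; rewrite ebp (sw a p ap au pu) (pm a au) // => /eqP.
case: (eqVneq c p) => [ecp|ncp].
  have bp : b != p by rewrite -ecp.
  by move: c2; rewrite ecp (sw b p bp bu pu) (pm b bu) // => /eqP.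
set w := [:: u; p; a; b; c].
have uw : uniq w by dtac.
have := allP FC4_ok _ (@FC_mem T chi 5 w u erefl).
rewrite [size w]/= !ori_bits //=; try dtac.
rewrite !hp // c1 c2 eqxx /=.
move: (chiro_bits u sf uw ch); rewrite [size w]/= => /andP [-> ->].
by [].
Qed.
End Ltu.



Lemma sf_transfer (T T' : finType) (c : T -> T -> T -> int) (c' : T' -> T' -> T' -> int)
  (g : T -> T') (P : pred T) x y z :
  sign_function c' ->
  (forall x y z, P x -> P y -> P z -> distinct3 x y z -> c x y z = c' (g x) (g y) (g z)) ->
  (forall x y, P x -> P y -> g x = g y -> x = y) ->
  P x -> P y -> P z -> distinct3 x y z ->
  (c x y z = 1%R \/ c x y z = (-1)%R) /\
    c x y z = c y z x /\ c x y z = c z x y /\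
    c x y z = (- c z y x)%R /\ c x y z = (- c y x z)%R /\
    c x y z = (- c x z y)%R.
Proof.
move=> sf' E inj px py pz d.
have d1 := d3_rot d; have d2 := d3_rot d1; have d3 := d3_sw d1; have d4 := d3_sw d; have d5 := d3_sw23 d.
have ne a b : P a -> P b -> a != b -> g a != g b by move=> pa pb; apply: contra_neq => /inj; apply.
have dg : distinct3 (g x) (g y) (g z).
  by move: (d); rewrite !d3E => /and3P [xy xz yz]; rewrite !ne.
rewrite (E x y z) // (E y z x) // (E z x y) // (E z y x) // (E y x z) // (E x z y) //.
exact: sf' _ _ _ dg.
Qed.

Section Join.
Variables (T1 T2 : finType) (chi1 : T1 -> T1 -> T1 -> int) (u1 u1m : T1)
          (chi2 : T2 -> T2 -> T2 -> int) (u2 u2p : T2).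
Hypotheses (ch1 : chirotope chi1) (ch2 : chirotope chi2)
  (hpred : is_pred chi1 u1 u1m) (hsucc : is_succ chi2 u2 u2p).
Let sf1 : sign_function chi1. Proof. by case: ch1. Qed.
Let sf2 : sign_function chi2. Proof. by case: ch2. Qed.

Local Notation J := (join_type u1 u2 u2p).
Local Notation chi3 := (join_chi chi1 u1 u1m chi2 u2 u2p).

Definition f1 (x : J) : T1 := match x with Some (inl a) => val a | _ => u1 end.
Definition f2 (x : J) : T2 :=
  match x with Some (inl a) => if val a == u1m then u2p else u2 | Some (inr b) => val b | None => u2 end.
Definition side1 (x : J) := match x with Some (inr _) => false | _ => true end.
Definition side2 (x : J) := match x with Some (inl a) => val a == u1m | _ => true end.

Lemma eqLL (a c : {x : T1 | x != u1}) :
  (Some (inl a) == Some (inl c) :> J) = (val a == val c).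
Proof. by apply/eqP/eqP => [[->] | /val_inj ->]. Qed.
Lemma eqRR (a c : {y : T2 | (y != u2) && (y != u2p)}) :
  (Some (inr a) == Some (inr c) :> J) = (val a == val c).
Proof. by apply/eqP/eqP => [[->] | /val_inj ->]. Qed.
Lemma eqLR a c : (Some (inl a) == Some (inr c) :> J) = false. Proof. by []. Qed.
Lemma eqRL a c : (Some (inr a) == Some (inl c) :> J) = false. Proof. by []. Qed.
Lemma eqSN (a : _) : (Some a == None :> J) = false. Proof. by []. Qed.
Lemma eqNS (a : _) : (None == Some a :> J) = false. Proof. by []. Qed.

Ltac dsimp := rewrite /distinct3 /= ?inE ?negb_or ?andbT ?eqLL ?eqRR ?eqLR ?eqRL ?eqSN ?eqNS /=.
Ltac rotc sf := first [ reflexivity | apply: (sf_rot sf); dtac | symmetry; apply: (sf_rot sf); dtac ].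

Lemma J1 x y z : side1 x -> side1 y -> side1 z -> distinct3 x y z ->
  chi3 x y z = chi1 (f1 x) (f1 y) (f1 z).
Proof.
case: x => [[[a ha]|[b hb]]|] //; case: y => [[[c hc]|[d hd]]|] //; case: z => [[[e he]|[g hg]]|] // _ _ _;
dsimp => dd; destr_and.
all: rewrite /join_chi /join_rule /=.
all: rotc sf1.
Qed.

Ltac substm := repeat match goal with H : is_true (?a == u1m) |- _ => move/eqP: H => H; subst a end.

Lemma J2 x y z : side2 x -> side2 y -> side2 z -> distinct3 x y z ->
  chi3 x y z = chi2 (f2 x) (f2 y) (f2 z).
Proof.
case: x => [[[a ha]|[b hb]]|]; case: y => [[[c hc]|[d hd]]|];
case: z => [[[e he]|[g hg]]|] => /= s1 s2 s3;

substm; dsimp; rewrite ?eqxx //= => dd; destr_and.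
all: rewrite /join_chi /join_rule /= ?eqxx /=.
all: have pu := hsucc.1.
all: try (move: (hb) => /= /andP [hb1 hb2]); try (move: (hd) => /= /andP [hd1 hd2]); try (move: (hg) => /= /andP [hg1 hg2]).
all: rotc sf2.
Qed.

Definition lt3 (x y : J) : bool :=
  match x, y with
  | None, Some _ => true
  | Some (inl a), Some (inl b) => ltu chi1 u1 (val a) (val b)
  | Some (inl _), Some (inr _) => true
  | Some (inr a), Some (inr b) => ltu chi2 u2 (val a) (val b)
  | _, _ => false
  end.

Definition sg3 (x y z : J) : int :=
  if [|| lt3 x y && lt3 y z, lt3 y z && lt3 z x | lt3 z x && lt3 x y] then 1%R else (-1)%R.

Lemma predv a : a != u1 -> a != u1m -> chi1 u1m a u1 = (-1)%R.
Proof.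
case: hpred => mu hm au am.
rewrite (sf_sw23 sf1) ?hm //; dtac.
Qed.
Lemma succv d : d != u2 -> d != u2p -> chi2 u2 d u2p = (-1)%R.
Proof.
case: hsucc => pu hp du dp.
rewrite (sf_sw23 sf2) ?hp //; dtac.
Qed.

Ltac vcase sf := match goal with |- ?C ?x ?y ?z = _ =>
  let hd := fresh "hd" in have hd : distinct3 x y z by dtac;
  case: (sf_val sf hd) => -> //
  end.

Lemma J3 x y z : ~~ [&& side1 x, side1 y & side1 z] -> ~~ [&& side2 x, side2 y & side2 z] ->
  distinct3 x y z -> chi3 x y z = sg3 x y z.
Proof.
case: x => [[[a ha]|[b hb]]|]; case: y => [[[c hc]|[d hd]]|];
case: z => [[[e he]|[g hg]]|] => //=.
all: try case: (eqVneq a u1m) => [?|na]; try case: (eqVneq c u1m) => [?|nc]; try case: (eqVneq e u1m) => [?|ne].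
all: subst; rewrite ?eqxx ?(negbTE na) ?(negbTE nc) ?(negbTE ne) //= => _ _.
all: dsimp; rewrite ?eqxx //= => dd; destr_and.
all: rewrite /join_chi /join_rule /sg3 /= ?eqxx ?(negbTE na) ?(negbTE nc) ?(negbTE ne) /=.
all: try (move: (hb) => /= /andP [hb1 hb2]); try (move: (hd) => /= /andP [hd1 hd2]); try (move: (hg) => /= /andP [hg1 hg2]).
all: have mu := hpred.1; have pu := hsucc.1.
all: try by [].
all: rewrite ?predv ?succv //.
all: rewrite ?(sf_rot sf2 (x := u2)); try dtac.
all: rewrite ltuE; try dtac.
all: rewrite /= ?andbT ?orbF ?andbF ?orbF ?orFb ?predv ?succv //.
all: first [apply: (sf_valb sf1); dtac | apply: (sf_valb sf2); dtac].
Qed.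

Let tr1 : transitive (ltu chi1 u1) := ltu_trans_pred ch1 hpred.
Let tr2 : transitive (ltu chi2 u2) := ltu_trans_succ ch2 hsucc.

Lemma lt3_irr : irreflexive lt3.
Proof. by case=> [[a|b]|] //=; apply: ltu_irr. Qed.

Lemma lt3_trans : transitive lt3.
Proof.
move=> y x z; case: x => [[a|b]|]; case: y => [[c|d]|]; case: z => [[e|g]|] //=.
- by move=> h1 h2; apply: (tr1 h1 h2).
- by move=> h1 h2; apply: (tr2 h1 h2).
Qed.

Lemma lt3_tot x y : x != y -> lt3 x y || lt3 y x.
Proof.
case: x => [[a|b]|]; case: y => [[c|d]|] //=.
- by rewrite eqLL => h; apply: ltu_tot.
- by rewrite eqRR => h; apply: ltu_tot.
Qed.

Lemma lt3_f1 x y : side1 x -> side1 y -> lt3 x y -> ltu chi1 u1 (f1 x) (f1 y).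
Proof.
case: x => [[a|b]|]; case: y => [[c|d]|] //= _ _ _.
by rewrite ltu_uE (valP c).
Qed.

Lemma lt3_f2 x y : side2 x -> side2 y -> lt3 x y -> ltu chi2 u2 (f2 x) (f2 y).
Proof.
have [pu hp] := hsucc.
case: x => [[a|b]|]; case: y => [[c|d]|] //=.
- by move=> /eqP -> /eqP ->; rewrite ltu_irr.
- move=> /eqP -> _ _; rewrite eqxx; case/andP: (valP d) => d1 d2.
  rewrite ltuE //; last by rewrite eq_sym.
  rewrite -(sf_rot sf2 (x := u2)) ?hp //; dtac.
- by move=> _ /eqP ->; rewrite eqxx ltu_uE.
- by move=> _ _; rewrite ltu_uE; case/andP: (valP d).
Qed.

Lemma f1_inj x y : side1 x -> side1 y -> f1 x = f1 y -> x = y.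
Proof.
case: x => [[a|b]|]; case: y => [[c|d]|] //= _ _.
- by move/val_inj => ->.
- by move=> e; move: (valP a); rewrite /= e eqxx.
- by move=> e; move: (valP c); rewrite /= -e eqxx.
Qed.

Lemma f2_inj x y : side2 x -> side2 y -> f2 x = f2 y -> x = y.
Proof.
have [pu hp] := hsucc.
case: x => [[a|b]|]; case: y => [[c|d]|] //=.
- by move=> /eqP ea /eqP ec _; congr (Some (inl _)); apply: val_inj => /=; rewrite ea ec.
all: try move: (valP b) => /= /andP [b1 b2]; try move: (valP d) => /= /andP [d1 d2].
all: try (move=> /eqP ->; rewrite eqxx).
all: try (move=> _ /eqP ->; rewrite eqxx).
- by move=> _ /eqP e; rewrite eq_sym e in d2.
- by move=> _ /eqP e; rewrite e in pu.
- by move=> /eqP e; rewrite e in b2.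
- by move=> _ _ e; congr (Some (inr _)); apply: val_inj.
- by move=> _ _ /eqP e; rewrite e in b1.
- by move=> /eqP e; rewrite eq_sym e in pu.
- by move=> _ _ /eqP e; rewrite eq_sym e in d1.
Qed.

Lemma sg3_sf x y z : distinct3 x y z ->
  (sg3 x y z = 1%R \/ sg3 x y z = (-1)%R) /\
    sg3 x y z = sg3 y z x /\ sg3 x y z = sg3 z x y /\
    sg3 x y z = (- sg3 z y x)%R /\ sg3 x y z = (- sg3 y x z)%R /\
    sg3 x y z = (- sg3 x z y)%R.
Proof.
move=> d; move: (d); rewrite d3E => /and3P [xy xz yz].
have neg a b : a != b -> lt3 b a = ~~ lt3 a b.
  move=> ab; case: (orP (lt3_tot ab)) => h.
    rewrite h; apply/negP => h'; by move: (lt3_irr a); rewrite (lt3_trans h h').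
  rewrite h; apply/esym/negP => h'; by move: (lt3_irr a); rewrite (lt3_trans h' h).
rewrite /sg3 (neg x y) // (neg y z) // (neg z x); last by rewrite eq_sym.
case exy: (lt3 x y); case eyz: (lt3 y z); case ezx: (lt3 z x) => /=.
all: rewrite ?opprK; repeat split; try by [left | right].
Qed.

Lemma sf3 : sign_function chi3.
Proof.
move=> x y z d.
case s1: [&& side1 x, side1 y & side1 z].
  case/and3P: s1 => sx sy sz.
  apply: (sf_transfer (c := chi3) (c' := chi1) (g := f1) (P := side1)) => //.
  - by move=> *; apply: J1.
  - exact: f1_inj.
case s2: [&& side2 x, side2 y & side2 z].
  case/and3P: s2 => sx sy sz.
  apply: (sf_transfer (c := chi3) (c' := chi2) (g := f2) (P := side2)) => //.
  - by move=> *; apply: J2.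
  - exact: f2_inj.
have d1 := d3_rot d; have d2 := d3_rot d1; have d3 := d3_sw d1; have d4 := d3_sw d; have d5 := d3_sw23 d.
have t1 a b c : [&& side1 a, side1 b & side1 c] = false -> ~~ [&& side1 b, side1 c & side1 a] /\
  ~~ [&& side1 c, side1 b & side1 a] /\ ~~ [&& side1 a, side1 b & side1 c] /\ ~~ [&& side1 b, side1 a & side1 c] /\
  ~~ [&& side1 a, side1 c & side1 b] /\ ~~ [&& side1 c, side1 a & side1 b].
  by case: (side1 a); case: (side1 b); case: (side1 c).
have t2 a b c : [&& side2 a, side2 b & side2 c] = false -> ~~ [&& side2 b, side2 c & side2 a] /\
  ~~ [&& side2 c, side2 b & side2 a] /\ ~~ [&& side2 a, side2 b & side2 c] /\ ~~ [&& side2 b, side2 a & side2 c] /\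
  ~~ [&& side2 a, side2 c & side2 b] /\ ~~ [&& side2 c, side2 a & side2 b].
  by case: (side2 a); case: (side2 b); case: (side2 c).
have [a1 [a2 [a3 [a4 [a5 a6]]]]] := t1 _ _ _ s1.
have [b1 [b2 [b3 [b4 [b5 b6]]]]] := t2 _ _ _ s2.
rewrite (J3 (x := x) (y := y) (z := z)) // (J3 (x := y) (y := z) (z := x)) // (J3 (x := z) (y := x) (z := y)) //.
rewrite (J3 (x := z) (y := y) (z := x)) // (J3 (x := y) (y := x) (z := z)) // (J3 (x := x) (y := z) (z := y)) //.
exact: sg3_sf.
Qed.

Lemma lt3_neq a b : lt3 a b -> a != b.
Proof. by move=> h; apply/eqP => e; move: h; rewrite e lt3_irr. Qed.

Lemma chain_d3 a b c : lt3 a b -> lt3 b c -> distinct3 a b c.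
Proof.
move=> ab bc; rewrite d3E (lt3_neq ab) (lt3_neq bc) (lt3_neq (lt3_trans ab bc)).
by [].
Qed.

Lemma K1 x y : lt3 x y -> y != None.
Proof. by case: x => [[a|b]|]; case: y => [[c|d]|]. Qed.

Lemma K2 x y : lt3 x y -> ~~ side1 x -> ~~ side1 y.
Proof. by case: x => [[a|b]|]; case: y => [[c|d]|]. Qed.

Lemma x0_max c : ltu chi1 u1 u1m c = false.
Proof.
have mu := hpred.1.
case: (eqVneq c u1) => [->|cu]; first by apply/negP => /ltu_r; rewrite eqxx.
case: (eqVneq c u1m) => [->|cm]; first by rewrite ltu_irr.
rewrite ltuE //; last by rewrite eq_sym.
by rewrite predv.
Qed.

Lemma K3 x y : lt3 x y -> ~~ side2 y -> (x == None) || ~~ side2 x.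
Proof.
case: x => [[a|b]|]; case: y => [[c|d]|] //= h hc.
apply/negP => /eqP ea; move: h; by rewrite ea x0_max.
Qed.

Lemma K4 x y : lt3 x y -> side1 x -> side2 x -> x != None -> ~~ side1 y.
Proof.
case: x => [[a|b]|]; case: y => [[c|d]|] //= h _ /eqP ea _.
by move: h; rewrite ea x0_max.
Qed.

Lemma mixed_one x y z : lt3 x y -> lt3 y z -> ~~ [&& side1 x, side1 y & side1 z] ->
  ~~ [&& side2 x, side2 y & side2 z] -> chi3 x y z = 1%R.
Proof.
move=> xy yz n1 n2; rewrite J3 //; last exact: chain_d3.
by rewrite /sg3 xy yz.
Qed.

Lemma f1_nu y : side1 y -> y != None -> f1 y != u1.
Proof. by case: y => [[a|b]|] //= _ _; apply: (valP a). Qed.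

Lemma f2_nu y : side2 y -> y != None -> f2 y != u2.
Proof.
have pu := hsucc.1.
case: y => [[a|b]|] //= => [/eqP -> _| _ _]; first by rewrite eqxx.
by case/andP: (valP b).
Qed.

Lemma u3_first y z : y != None -> lt3 y z -> chi3 None y z = 1%R.
Proof.
move=> yn yz; have zn := K1 yz.
have ny : lt3 None y by case: y yn yz.
have d := chain_d3 ny yz.
case s1: [&& side1 None, side1 y & side1 z].
  case/and3P: s1 => _ sy sz; rewrite J1 //=.
  have l := lt3_f1 sy sz yz.
  have yu := f1_nu sy yn.
  case/and3P: (ltu_l l yu) => zu yz' /eqP e.
  rewrite (sf_rot sf1 (x := u1)) //; dtac.
case s2: [&& side2 None, side2 y & side2 z].
  case/and3P: s2 => _ sy sz; rewrite J2 //=.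
  have l := lt3_f2 sy sz yz.
  have yu := f2_nu sy yn.
  case/and3P: (ltu_l l yu) => zu yz' /eqP e.
  rewrite (sf_rot sf2 (x := u2)) //; dtac.
by rewrite J3 ?s1 ?s2 // /sg3 ny yz.
Qed.

Lemma sig3 p q r s : lt3 p q -> lt3 q r -> lt3 r s ->
  mono4 (chi3 q r s) (chi3 p r s) (chi3 p q s) (chi3 p q r).
Proof.
move=> pq qr rs.
have pr := lt3_trans pq qr; have qs := lt3_trans qr rs; have ps := lt3_trans pr rs.
have qn := K1 pq; have rn := K1 qr; have sn := K1 rs.
case A1: [&& side1 p, side1 q, side1 r & side1 s].
  case/and4P: A1 => sp sq sr ss.
  rewrite !J1 //; try exact: chain_d3.
  by apply: (ltu_mono ch1 tr1); apply: lt3_f1.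
case A2: [&& side2 p, side2 q, side2 r & side2 s].
  case/and4P: A2 => sp sq sr ss.
  rewrite !J2 //; try exact: chain_d3.
  by apply: (ltu_mono ch2 tr2); apply: lt3_f2.
have hB : ~~ side1 s.
  apply/negP => ss; move: A1; rewrite ss andbT.
  case: (boolP (side1 r)) => sr; last by move: (K2 rs sr); rewrite ss.
  case: (boolP (side1 q)) => sq; last by move: (K2 qr sq); rewrite sr.
  case: (boolP (side1 p)) => sp; last by move: (K2 pq sp); rewrite sq.
  by [].
have hA : (p == None) || ~~ side2 p.
  apply/negPn/negP => /norP [pn /negPn sp]; move: A2; rewrite sp /=.
  case: (boolP (side2 q)) => sq; last by move: (K3 pq sq); rewrite (negbTE pn) sp.
  case: (boolP (side2 r)) => sr; last by move: (K3 qr sr); rewrite (negbTE qn) sq.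
  case: (boolP (side2 s)) => ss; last by move: (K3 rs ss); rewrite (negbTE rn) sr.
  by [].
have vps a : lt3 p a -> lt3 a s -> chi3 p a s = 1%R.
  move=> pa as_; case/orP: hA => [/eqP ep | np].
    by rewrite ep u3_first //; exact: K1 pa.
  by apply: mixed_one => //; [rewrite ?(negbTE hB) ?andbF | rewrite (negbTE np)].
have alt : chi3 q r s = 1%R \/ chi3 p q r = 1%R.
  case: (boolP [&& side2 q, side2 r & side2 s]) => [/and3P [sq sr _] | n2].
    right; case/orP: hA => [/eqP ep | np].
      by rewrite ep u3_first.
    case: (boolP [&& side1 p, side1 q & side1 r]) => [/and3P [_ sq1 sr1] | n1].
      by move: (K4 qr sq1 sq qn); rewrite sr1.
    by apply: mixed_one => //; rewrite (negbTE np).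
  left; apply: mixed_one => //; by rewrite (negbTE hB) ?andbF.
rewrite (vps r) // (vps q) // /mono4.
by rewrite eqxx /=; case: alt => ->; rewrite eqxx /= ?addn0; case: (_ != _).
Qed.

Lemma ext3 : extreme chi3 None.
Proof.
have mu := hpred.1.
pose i0 : J := Some (inl (exist _ u1m mu)).
pose S := [pred x : J | x != None].
pose F := fun i : J => #|[pred j | lt3 j i]|.
have [y Sy ymax] : exists2 y, S y & forall z, S z -> F z <= F y.
  by case: (@arg_maxnP J i0 S F isT) => y Sy h; exists y.
exists y; split; first exact: Sy.
exists (-1)%R => z zn zy.
have zy' : lt3 z y.
  case/orP: (lt3_tot zy) => // yz; exfalso.
  have := ymax z zn; rewrite leqNgt => /negP; apply.
  apply: proper_card; apply/properP; split.
    by apply/subsetP => j; rewrite !inE => jy; exact: lt3_trans jy yz.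
  by exists y; rewrite !inE ?yz ?lt3_irr.
have d : distinct3 None y z.
  have Sy' : y != None := Sy.
  by rewrite d3E eq_sym Sy' eq_sym zn eq_sym zy.
by rewrite (sf_sw23 sf3 d) u3_first.
Qed.

Lemma join_main : rooted_chirotope chi3 None.
Proof.
split; last exact: ext3.
exact: (sig_chirotope sf3 lt3_trans lt3_tot sig3).
Qed.
End Join.


Unset Implicit Arguments.

Theorem corollary2p3 (T1 T2 : finType)
  (chi1 : T1 -> T1 -> T1 -> int) (u1 u1m : T1)
  (chi2 : T2 -> T2 -> T2 -> int) (u2 u2p : T2) :
  rooted_chirotope chi1 u1 -> rooted_chirotope chi2 u2 ->
  is_pred chi1 u1 u1m -> is_succ chi2 u2 u2p ->
  rooted_chirotope (join_chi chi1 u1 u1m chi2 u2 u2p)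
                   (None : join_type u1 u2 u2p).
Proof.
move=> [c1 _] [c2 _] hp hs.
exact: (join_main c1 c2 hp hs).
Qed.
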